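(* Let $P$ be a finite point set in general position. Every cut vertex of $G_\bigtriangledown(P)$ lies on the boundary of the outer (unbounded) face of the straight-line plane embedding of $G_\bigtriangledown(P)$.
   Context: A finite point set $P$ in the plane is in general position if no line through two points of $P$ makes an angle of $0^\circ$, $60^\circ$ or $120^\circ$ with the horizontal. A down-triangle is an equilateral triangle with one side parallel to the $x$-axis and the corner opposite to this side below that side. $G_\bigtriangledown(P)$ is the graph with vertex set $P$ in which $p,q$ are adjacent iff some (closed) down-triangle contains $p$ and $q$ and no other point of $P$. Drawing each edge $pq$ as the straight segment $pq$ gives a plane embedding of $G_\bigtriangledown(P)$. *)

(* Defs.v *)
From Stdlib Require Import Reals List Relations.
Open Scope R_scope.

Definition point := (R * R)%type.

(* General position: no line through two distinct points of P makes an
   angle of 0, 60 or 120 degrees with the horizontal. *)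
Definition general_position (P : list point) : Prop :=
  forall p q, In p P -> In q P -> p <> q ->
    snd q - snd p <> 0 /\
    snd q - snd p <> sqrt 3 * (fst q - fst p) /\
    snd q - snd p <> - sqrt 3 * (fst q - fst p).

(* Closed down-triangle with bottom apex (ax, ay) and height h > 0:
   horizontal top side at y = ay + h, the two other sides of slope +-sqrt 3
   through the apex.  This is an equilateral triangle of side 2h/sqrt 3. *)
Definition in_down_triangle (ax ay h : R) (z : point) : Prop :=
  snd z <= ay + h /\ sqrt 3 * Rabs (fst z - ax) <= snd z - ay.

Definition tri_edge (P : list point) (p q : point) : Prop :=
  In p P /\ In q P /\ p <> q /\
  exists ax ay h, 0 < h /\
    in_down_triangle ax ay h p /\ in_down_triangle ax ay h q /\
    forall r, In r P -> in_down_triangle ax ay h r -> r = p \/ r = q.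

Definition tri_edge_minus (P : list point) (v p q : point) : Prop :=
  tri_edge P p q /\ p <> v /\ q <> v.

Definition cut_vertex (P : list point) (v : point) : Prop :=
  In v P /\
  exists u w, In u P /\ In w P /\ u <> v /\ w <> v /\
    clos_refl_trans point (tri_edge P) u w /\
    ~ clos_refl_trans point (tri_edge_minus P v) u w.

Definition on_segment (p q z : point) : Prop :=
  exists t, 0 <= t <= 1 /\
    fst z = fst p + t * (fst q - fst p) /\ snd z = snd p + t * (snd q - snd p).

Definition drawing (P : list point) (z : point) : Prop :=
  In z P \/ exists p q, tri_edge P p q /\ on_segment p q z.

Definition sqdist (a b : point) : R :=
  (fst a - fst b) ^ 2 + (snd a - snd b) ^ 2.

(* z lies in the outer (unbounded) face: z is off the drawing and the path
   component of z in the complement of the drawing is unbounded, i.e. z can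
   be joined by a continuous curve avoiding the drawing to points arbitrarily
   far away. *)
Definition in_outer_face (P : list point) (z : point) : Prop :=
  ~ drawing P z /\
  forall M : R, exists fx fy : R -> R,
    continuity fx /\ continuity fy /\
    fx 0 = fst z /\ fy 0 = snd z /\
    (forall t, 0 <= t <= 1 -> ~ drawing P (fx t, fy t)) /\
    M < (fx 1) ^ 2 + (fy 1) ^ 2.

(* z lies on the boundary of the outer face: z is in its closure (it is never
   in the open face itself when z is a vertex). *)
Definition on_outer_boundary (P : list point) (z : point) : Prop :=
  ~ in_outer_face P z /\
  forall eps, 0 < eps -> exists y, in_outer_face P y /\ sqdist y z < eps.

(* Main.v *)
Require Import Defs.
From Stdlib Require Import Reals List Relations Lra Lia Classical Wellfounded Arith.
Open Scope R_scope.

Definition lin (a b : R) (z : point) : R := a * fst z + b * snd z.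
Definition f1 := lin (- sqrt 3) 1.
Definition f2 := lin (sqrt 3) 1.
Definition f3 := lin 0 (-2).

Lemma s3_pos : 0 < sqrt 3.
Proof. apply sqrt_lt_R0; lra. Qed.
Lemma s3_sq : sqrt 3 * sqrt 3 = 3.
Proof. apply sqrt_sqrt; lra. Qed.

Lemma fsum z : f1 z + f2 z + f3 z = 0.
Proof. unfold f1, f2, f3, lin; ring. Qed.

Lemma f_inj p q : f1 p = f1 q -> f2 p = f2 q -> p = q.
Proof.
  destruct p as [px py], q as [qx qy]; unfold f1, f2, lin; simpl; intros H1 H2.
  assert (py = qy) by lra.
  assert (sqrt 3 * (px - qx) = 0) by lra.
  apply Rmult_integral in H0; destruct H0 as [H0|H0].
  - pose proof s3_pos; lra.
  - f_equal; lra.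
Qed.

Lemma tri_iff ax ay h z : in_down_triangle ax ay h z <->
  f1 z >= ay - sqrt 3 * ax /\ f2 z >= ay + sqrt 3 * ax /\ f3 z >= -2 * (ay + h).
Proof.
  unfold in_down_triangle, f1, f2, f3, lin.
  destruct (Rcase_abs (fst z - ax)) as [Hn|Hp].
  - rewrite (Rabs_left _ Hn). pose proof s3_pos.
    assert (sqrt 3 * (fst z - ax) < 0) by (apply Rmult_lt_reg_l with (/ sqrt 3); [apply Rinv_0_lt_compat; lra | field_simplify; lra]).
    split; intros; lra.
  - rewrite (Rabs_right _ Hp). pose proof s3_pos.
    assert (sqrt 3 * (fst z - ax) >= 0) by (apply Rle_ge, Rmult_le_pos; lra).
    split; intros; lra.
Qed.

Lemma gp_f P p q : general_position P -> In p P -> In q P -> p <> q ->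
  f1 p <> f1 q /\ f2 p <> f2 q /\ f3 p <> f3 q.
Proof.
  intros G Hp Hq Hpq. destruct (G p q Hp Hq Hpq) as [A [B C]].
  unfold f1, f2, f3, lin. repeat split; intro; [apply B | apply C | apply A]; lra.
Qed.

Definition inM (p q r : point) : Prop :=
  f1 r >= Rmin (f1 p) (f1 q) /\ f2 r >= Rmin (f2 p) (f2 q) /\ f3 r >= Rmin (f3 p) (f3 q).

Definition inMb (p q r : point) : bool :=
  if Rge_dec (f1 r) (Rmin (f1 p) (f1 q)) then
  if Rge_dec (f2 r) (Rmin (f2 p) (f2 q)) then
  if Rge_dec (f3 r) (Rmin (f3 p) (f3 q)) then true else false else false else false.

Lemma inMb_spec p q r : inMb p q r = true <-> inM p q r.
Proof.
  unfold inMb, inM.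
  repeat destruct Rge_dec;
  split; intros; try tauto; try discriminate.
Qed.

Lemma inMb_false p q r : ~ inM p q r -> inMb p q r = false.
Proof. intros H. destruct (inMb p q r) eqn:E; auto. apply inMb_spec in E; tauto. Qed.

Lemma inM_sym p q r : inM p q r -> inM q p r.
Proof. unfold inM; rewrite (Rmin_comm (f1 q)), (Rmin_comm (f2 q)), (Rmin_comm (f3 q)); auto. Qed.

Lemma inM_l p q : inM p q p.
Proof. unfold inM; repeat split; apply Rle_ge; apply Rmin_l. Qed.
Lemma inM_r p q : inM p q q.
Proof. unfold inM; repeat split; apply Rle_ge; apply Rmin_r. Qed.

Lemma min_aux a b c d : c >= Rmin a b -> d >= Rmin a c -> d >= Rmin a b.
Proof. unfold Rmin; repeat destruct Rle_dec; lra. Qed.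
Lemma min_aux2 a b c d : c >= Rmin a b -> d >= Rmin c b -> d >= Rmin a b.
Proof. unfold Rmin; repeat destruct Rle_dec; lra. Qed.

Lemma inM_sub1 p q r z : inM p q r -> inM p r z -> inM p q z.
Proof. unfold inM; intros [A [B C]] [D [E F]]; repeat split; eapply min_aux; eauto. Qed.
Lemma inM_sub2 p q r z : inM p q r -> inM r q z -> inM p q z.
Proof. unfold inM; intros [A [B C]] [D [E F]]; repeat split; eapply min_aux2; eauto. Qed.

Lemma filter_le {A} (g1 g2 : A -> bool) l :
  (forall z, In z l -> g1 z = true -> g2 z = true) ->
  (length (filter g1 l) <= length (filter g2 l))%nat.
Proof.
  induction l as [|a l IH]; simpl; intros H; auto.
  assert (IH' := IH (fun z Hz => H z (or_intror Hz))).
  destruct (g1 a) eqn:E1.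
  - rewrite (H a (or_introl eq_refl) E1). simpl. lia.
  - destruct (g2 a); simpl; lia.
Qed.

Lemma filter_lt {A} (g1 g2 : A -> bool) l x :
  (forall z, In z l -> g1 z = true -> g2 z = true) ->
  In x l -> g1 x = false -> g2 x = true ->
  (length (filter g1 l) < length (filter g2 l))%nat.
Proof.
  induction l as [|a l IH]; simpl; intros H Hx H1 H2; [contradiction|].
  assert (Hl := filter_le g1 g2 l (fun z Hz => H z (or_intror Hz))).
  destruct Hx as [<-|Hx].
  - rewrite H1, H2; simpl; lia.
  - assert (IH' := IH (fun z Hz => H z (or_intror Hz)) Hx H1 H2).
    destruct (g1 a) eqn:E1.
    + rewrite (H a (or_introl eq_refl) E1). simpl. lia.
    + destruct (g2 a); simpl; lia.
Qed.

Definition cnt (P : list point) p q := length (filter (inMb p q) P).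

Lemma edge_min P p q : In p P -> In q P -> p <> q ->
  (forall r, In r P -> inM p q r -> r = p \/ r = q) -> tri_edge P p q.
Proof.
  intros Hp Hq Hpq H.
  set (C1 := Rmin (f1 p) (f1 q)); set (C2 := Rmin (f2 p) (f2 q)); set (C3 := Rmin (f3 p) (f3 q)).
  pose proof s3_pos as S.
  assert (Hsum : C1 + C2 + C3 < 0).
  { destruct (Rlt_dec (C1 + C2 + C3) 0) as [|Hn]; auto. exfalso.
    pose proof (fsum p); pose proof (fsum q).
    pose proof (Rmin_l (f1 p) (f1 q)); pose proof (Rmin_r (f1 p) (f1 q)).
    pose proof (Rmin_l (f2 p) (f2 q)); pose proof (Rmin_r (f2 p) (f2 q)).
    pose proof (Rmin_l (f3 p) (f3 q)); pose proof (Rmin_r (f3 p) (f3 q)).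
    fold C1 C2 C3 in H2, H3, H4, H5, H6, H7.
    apply Hpq, f_inj; lra. }
  assert (Hm : forall z, inM p q z <->
     in_down_triangle ((C2 - C1) / (2 * sqrt 3)) ((C1 + C2) / 2) (- (C1 + C2 + C3) / 2) z).
  { intro z. rewrite tri_iff.
    replace (sqrt 3 * ((C2 - C1) / (2 * sqrt 3))) with ((C2 - C1) / 2) by (field; lra).
    unfold inM; fold C1 C2 C3. split; intros [A [B C]]; repeat split; lra. }
  split; [auto|split; [auto|split; [auto|]]].
  exists ((C2 - C1) / (2 * sqrt 3)), ((C1 + C2) / 2), (- (C1 + C2 + C3) / 2).
  split; [lra|]. split; [apply Hm, inM_l|]. split; [apply Hm, inM_r|].
  intros r Hr Hrt. apply H; auto. apply Hm; auto.
Qed.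

Lemma not_all_le p q : p <> q -> ~ (f1 p <= f1 q /\ f2 p <= f2 q /\ f3 p <= f3 q).
Proof.
  intros Hpq [A [B C]]. pose proof (fsum p); pose proof (fsum q).
  apply Hpq, f_inj; lra.
Qed.

Lemma out_aux a b c : c >= Rmin a b -> b >= Rmin a c -> c <> b -> a <= b.
Proof. unfold Rmin; destruct (Rle_dec a b); destruct (Rle_dec a c); intros; lra. Qed.

Lemma outside P p q r : general_position P -> In p P -> In q P -> In r P ->
  p <> q -> r <> q -> inM p q r -> ~ inM p r q.
Proof.
  intros G Hp Hq Hr Hpq Hrq Hin Hin2.
  destruct (gp_f P r q G Hr Hq Hrq) as [D1 [D2 D3]].
  destruct Hin as [A1 [A2 A3]]; destruct Hin2 as [B1 [B2 B3]].
  apply (not_all_le p q); [congruence|].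
  repeat split; eapply out_aux; eauto.
Qed.

Lemma path_lemma P v : general_position P ->
  forall n p q, cnt P p q = n -> In p P -> In q P -> p <> v -> q <> v -> ~ inM p q v ->
  clos_refl_trans point (tri_edge_minus P v) p q.
Proof.
  intros G n. induction n as [n IH] using (well_founded_induction lt_wf).
  intros p q Hn Hp Hq Hpv Hqv Hv.
  destruct (classic (p = q)) as [<-|Hpq]; [apply rt_refl|].
  destruct (classic (exists r, In r P /\ inM p q r /\ r <> p /\ r <> q)) as [[r [Hr [Hin [Hrp Hrq]]]]|Hno].
  - assert (Hrv : r <> v) by (intro; subst; contradiction).
    apply rt_trans with r.
    + apply (IH (cnt P p r)); auto.
      * rewrite <- Hn. unfold cnt. apply filter_lt with q; auto.
        -- intros z _ Hz. apply inMb_spec. apply inMb_spec in Hz. eapply inM_sub1; eauto.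
        -- apply inMb_false. apply (outside P); auto.
        -- apply inMb_spec, inM_r.
      * intro H. apply Hv. eapply inM_sub1; eauto.
    + apply (IH (cnt P r q)); auto.
      * rewrite <- Hn. unfold cnt. apply filter_lt with p; auto.
        -- intros z _ Hz. apply inMb_spec. apply inMb_spec in Hz. eapply inM_sub2; eauto.
        -- apply inMb_false. intro H.
           assert (Hs : ~ inM q r p).
           { apply (outside P); auto. apply inM_sym; auto. }
           apply Hs. apply inM_sym; auto.
        -- apply inMb_spec, inM_l.
      * intro H. apply Hv. eapply inM_sub2; eauto.
  - apply rt_step. split; [|split; auto].
    apply edge_min; auto. intros r Hr Hin.
    destruct (classic (r = p)); auto. destruct (classic (r = q)); auto.
    exfalso; apply Hno; exists r; auto.
Qed.

Lemma conv_lt a b K l : 0 <= l <= 1 -> a < K -> b < K -> a + l * (b - a) < K.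
Proof. intros Hl Ha Hb.
  assert (E : K - (a + l * (b - a)) = (1 - l) * (K - a) + l * (K - b)) by ring.
  assert (0 <= (1 - l) * (K - a)) by (apply Rmult_le_pos; lra).
  assert (0 <= l * (K - b)) by (apply Rmult_le_pos; lra).
  destruct (Rlt_dec l 1).
  - assert (0 < (1 - l) * (K - a)) by (apply Rmult_lt_0_compat; lra). lra.
  - assert (l = 1) by lra. subst l. lra.
Qed.
Lemma conv_ge a b K l : 0 <= l <= 1 -> a >= K -> b >= K -> a + l * (b - a) >= K.
Proof. intros Hl Ha Hb.
  assert (E : a + l * (b - a) - K = (1 - l) * (a - K) + l * (b - K)) by ring.
  assert (0 <= (1 - l) * (a - K)) by (apply Rmult_le_pos; lra).
  assert (0 <= l * (b - K)) by (apply Rmult_le_pos; lra). lra.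
Qed.

Lemma lin_seg a b p q z l : fst z = fst p + l * (fst q - fst p) ->
  snd z = snd p + l * (snd q - snd p) -> lin a b z = lin a b p + l * (lin a b q - lin a b p).
Proof. unfold lin; intros -> ->; ring. Qed.

Lemma escape P v a1 b1 a2 b2 a3 b3 dx dy :
  In v P ->
  a1 * dx + b1 * dy = 1 -> a2 * dx + b2 * dy = 1 -> a3 * dx + b3 * dy < 0 -> dy <> 0 ->
  (forall ax ay h, exists C1 C2 C3, forall z, in_down_triangle ax ay h z <->
     (lin a1 b1 z >= C1 /\ lin a2 b2 z >= C2 /\ lin a3 b3 z >= C3)) ->
  (forall y, In y P -> y <> v -> ~ (lin a1 b1 y >= lin a1 b1 v /\ lin a2 b2 y >= lin a2 b2 v)) ->
  forall t, 0 < t -> ~ drawing P (fst v + t * dx, snd v + t * dy).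
Proof.
  intros Hv D1 D2 D3 Hdy Htri Hemp t Ht.
  set (z := (fst v + t * dx, snd v + t * dy)).
  assert (Z1 : lin a1 b1 z = lin a1 b1 v + t) by (unfold z, lin; simpl; transitivity (a1 * fst v + b1 * snd v + t * (a1 * dx + b1 * dy)); [ring | rewrite D1; ring]).
  assert (Z2 : lin a2 b2 z = lin a2 b2 v + t) by (unfold z, lin; simpl; transitivity (a2 * fst v + b2 * snd v + t * (a2 * dx + b2 * dy)); [ring | rewrite D2; ring]).
  assert (Z3 : lin a3 b3 z < lin a3 b3 v).
  { unfold z, lin; simpl. replace (a3 * (fst v + t * dx) + b3 * (snd v + t * dy))
      with (a3 * fst v + b3 * snd v + t * (a3 * dx + b3 * dy)) by ring. nra. }
  assert (Hzv : z <> v).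
  { intro E. assert (snd z = snd v) by (rewrite E; auto). unfold z in H; simpl in H.
    assert (t * dy = 0) by lra. apply Rmult_integral in H0. destruct H0; lra. }
  intros [Hin | [p [q [[Hp [Hq [Hpq [ax [ay [h [Hh [Tp [Tq Honly]]]]]]]]] [l [Hl [Hx Hy]]]]]]].
  - apply (Hemp z Hin Hzv). lra.
  - fold z in Hx, Hy.
    assert (S1 := lin_seg a1 b1 p q z l Hx Hy).
    assert (S2 := lin_seg a2 b2 p q z l Hx Hy).
    assert (S3 := lin_seg a3 b3 p q z l Hx Hy).
    destruct (Htri ax ay h) as [C1 [C2 [C3 HT]]].
    apply HT in Tp; apply HT in Tq. destruct Tp as [P1 [P2 P3]]; destruct Tq as [Q1 [Q2 Q3]].
    destruct (classic (p = v)) as [Epv|Npv].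
    + subst p. apply (Hemp q Hq (not_eq_sym Hpq)). split; nra.
    + destruct (classic (q = v)) as [Eqv|Nqv].
      * subst q.
        assert (E1 : lin a1 b1 z = lin a1 b1 v + (1 - l) * (lin a1 b1 p - lin a1 b1 v)) by (rewrite S1; ring).
        assert (E2 : lin a2 b2 z = lin a2 b2 v + (1 - l) * (lin a2 b2 p - lin a2 b2 v)) by (rewrite S2; ring).
        apply (Hemp p Hp Npv). split; nra.
      * assert (Hp' := Hemp p Hp Npv). assert (Hq' := Hemp q Hq Nqv).
        assert (G3 : lin a3 b3 z >= C3) by (rewrite S3; apply conv_ge; auto).
        assert (Hvt : in_down_triangle ax ay h v).
        { apply HT. split; [|split; [|lra]].
          - destruct (Rlt_dec (lin a1 b1 p) (lin a1 b1 v)); [lra|].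
            destruct (Rlt_dec (lin a1 b1 q) (lin a1 b1 v)); [lra|].
            exfalso. destruct (Rlt_dec (lin a2 b2 p) (lin a2 b2 v)).
            + apply Hq'. split; [lra|]. destruct (Rlt_dec (lin a2 b2 q) (lin a2 b2 v)); [|lra].
              assert (lin a2 b2 z < lin a2 b2 v) by (rewrite S2; apply conv_lt; auto). lra.
            + apply Hp'. lra.
          - destruct (Rlt_dec (lin a2 b2 p) (lin a2 b2 v)); [lra|].
            destruct (Rlt_dec (lin a2 b2 q) (lin a2 b2 v)); [lra|].
            exfalso. destruct (Rlt_dec (lin a1 b1 p) (lin a1 b1 v)).
            + apply Hq'. split; [|lra]. destruct (Rlt_dec (lin a1 b1 q) (lin a1 b1 v)); [|lra].
              assert (lin a1 b1 z < lin a1 b1 v) by (rewrite S1; apply conv_lt; auto). lra.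
            + apply Hp'. lra. }
        destruct (Honly v Hv Hvt); auto.
Qed.

Lemma cont_aff a b : continuity (fun s => a + s * b).
Proof.
  apply continuity_plus.
  - apply continuity_const. intros x y; reflexivity.
  - apply continuity_mult; [apply derivable_continuous, derivable_id | apply continuity_const; intros x y; reflexivity].
Qed.

Lemma boundary_of_escape P v dx :
  In v P -> dx * dx = 3 / 4 ->
  (forall t, 0 < t -> ~ drawing P (fst v + t * dx, snd v + t * (-1/2))) ->
  on_outer_boundary P v.
Proof.
  intros Hv Hdx Hesc. split.
  - intros [H _]. apply H. left; auto.
  - intros eps Heps.
    set (t0 := eps / (1 + eps)).
    assert (T0 : 0 < t0) by (unfold t0; apply Rdiv_lt_0_compat; lra).
    assert (T1 : t0 < 1) by (unfold t0; apply Rmult_lt_reg_r with (1 + eps); [lra|];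
      unfold Rdiv; rewrite Rmult_assoc, Rinv_l; lra).
    assert (T2 : t0 < eps) by (unfold t0; apply Rmult_lt_reg_r with (1 + eps); [lra|];
      unfold Rdiv; rewrite Rmult_assoc, Rinv_l; nra).
    exists (fst v + t0 * dx, snd v + t0 * (-1/2)). split.
    + split; [apply Hesc; auto|].
      intro M. set (K := 2 * (Rabs M + 1 + Rabs (snd v))).
      assert (HK : 0 < K) by (unfold K; pose proof (Rabs_pos M); pose proof (Rabs_pos (snd v)); lra).
      exists (fun s => (fst v + t0 * dx) + s * (K * dx)), (fun s => (snd v + t0 * (-1/2)) + s * (K * (-1/2))).
      split; [|split].
      * apply cont_aff.
      * apply cont_aff.
      * simpl. split; [ring|]. split; [ring|]. split.
        -- intros s Hs.
           replace (fst v + t0 * dx + s * (K * dx), snd v + t0 * (-1/2) + s * (K * (-1/2)))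
             with (fst v + (t0 + s * K) * dx, snd v + (t0 + s * K) * (-1/2)) by (f_equal; ring).
           apply Hesc. nra.
        -- replace (snd v + t0 * (-1 / 2) + 1 * (K * (-1 / 2))) with (snd v + (t0 + 1 * K) * (-1 / 2)) by ring.
           set (Y := snd v + (t0 + 1 * K) * (-1 / 2)).
           assert (HY : Y <= - (Rabs M + 1)).
           { unfold Y, K. pose proof (Rle_abs (snd v)). lra. }
           pose proof (Rle_abs M). pose proof (Rabs_pos M).
           assert (HY2 : (Rabs M + 1) * (Rabs M + 1) <= (- Y) * (- Y))
             by (apply Rmult_le_compat; lra).
           assert (HX : 0 <= (fst v + t0 * dx + 1 * (K * dx)) ^ 2) by (apply pow2_ge_0).
           assert (E : Y ^ 2 = (- Y) * (- Y)) by ring.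
           assert ((Rabs M + 1) <= (Rabs M + 1) * (Rabs M + 1))
             by (rewrite <- (Rmult_1_r (Rabs M + 1)) at 1; apply Rmult_le_compat_l; lra).
           lra.
    + unfold sqdist; cbn [fst snd].
      replace ((fst v + t0 * dx - fst v) ^ 2 + (snd v + t0 * (-1 / 2) - snd v) ^ 2) with (t0 * t0) by (simpl; nra).
      assert (t0 * t0 < t0 * 1) by (apply Rmult_lt_compat_l; lra). lra.
Qed.

Lemma f_lin_tri ax ay h z : in_down_triangle ax ay h z <->
  f1 z >= ay - sqrt 3 * ax /\ f2 z >= ay + sqrt 3 * ax /\ f3 z >= -2 * (ay + h).
Proof. apply tri_iff. Qed.

Theorem corollary1 (P : list point) :
  NoDup P -> general_position P ->
  forall v, cut_vertex P v -> on_outer_boundary P v.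
Proof.
  intros Hnd G v [Hv [u [w [Hu [Hw [Huv [Hwv [_ Hnot]]]]]]]].
  pose proof s3_pos as S. pose proof s3_sq as S2.
  destruct (classic (exists y, In y P /\ y <> v /\ f2 y >= f2 v /\ f3 y >= f3 v)) as [[y1 [Hy1 [Hy1v [A2 A3]]]]|N1].
  - destruct (classic (exists y, In y P /\ y <> v /\ f1 y >= f1 v /\ f3 y >= f3 v)) as [[y2 [Hy2 [Hy2v [B1 B3]]]]|N2].
    + exfalso. apply Hnot.
      destruct (gp_f P y1 v G Hy1 Hv Hy1v) as [_ [E2 E3]].
      destruct (gp_f P y2 v G Hy2 Hv Hy2v) as [E1' [_ E3']].
      assert (Hc : forall x, In x P -> x <> v -> clos_refl_trans point (tri_edge_minus P v) x y1
                                            /\ clos_refl_trans point (tri_edge_minus P v) y1 x).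
      { intros x Hx Hxv.
        assert (to1 : ~ (f2 x <= f2 v /\ f3 x <= f3 v) ->
                  clos_refl_trans point (tri_edge_minus P v) x y1 /\
                  clos_refl_trans point (tri_edge_minus P v) y1 x).
        { intros Hn. split; (eapply path_lemma; [exact G|reflexivity|auto..]);
            intros [_ [M2 M3]]; apply Hn; revert M2 M3; unfold Rmin;
            repeat destruct Rle_dec; intros; split; lra. }
        destruct (classic (f2 x <= f2 v /\ f3 x <= f3 v)) as [[X2 X3]|Hn]; [|apply to1; auto].
        assert (Hxy2 : clos_refl_trans point (tri_edge_minus P v) x y2 /\
                       clos_refl_trans point (tri_edge_minus P v) y2 x).
        { assert (Hn : ~ (f1 x <= f1 v /\ f3 x <= f3 v)).
          { intros [X1 _]. apply Hxv, f_inj.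
            - pose proof (fsum x); pose proof (fsum v); lra.
            - pose proof (fsum x); pose proof (fsum v); lra. }
          split; (eapply path_lemma; [exact G|reflexivity|auto..]);
            intros [M1 [_ M3]]; apply Hn; revert M1 M3; unfold Rmin;
            repeat destruct Rle_dec; intros; split; lra. }
        assert (H21 : clos_refl_trans point (tri_edge_minus P v) y2 y1 /\
                      clos_refl_trans point (tri_edge_minus P v) y1 y2).
        { assert (Hn : ~ (f2 y2 <= f2 v /\ f3 y2 <= f3 v)) by lra.
          split; (eapply path_lemma; [exact G|reflexivity|auto..]);
            intros [_ [M2 M3]]; apply Hn; revert M2 M3; unfold Rmin;
            repeat destruct Rle_dec; intros; split; lra. }
        destruct Hxy2, H21. split; eapply rt_trans; eauto. }
      apply rt_trans with y1; [apply Hc|apply Hc]; auto.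
    +
      apply boundary_of_escape with (- sqrt 3 / 2); [auto| nra |].
      apply (escape P v (- sqrt 3) 1 0 (-2) (sqrt 3) 1); auto; try nra.
      * intros ax ay h. exists (ay - sqrt 3 * ax), (-2 * (ay + h)), (ay + sqrt 3 * ax).
        intro z. rewrite tri_iff. unfold f1, f2, f3. tauto.
      * intros y Hy Hyv Hc. apply N2. exists y. unfold f1, f3. tauto.
  - apply boundary_of_escape with (sqrt 3 / 2); [auto| nra |].
    apply (escape P v (sqrt 3) 1 0 (-2) (- sqrt 3) 1); auto; try nra.
    + intros ax ay h. exists (ay + sqrt 3 * ax), (-2 * (ay + h)), (ay - sqrt 3 * ax).
      intro z. rewrite tri_iff. unfold f1, f2, f3. tauto.
    + intros y Hy Hyv Hc. apply N1. exists y. unfold f2, f3. tauto.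
Qed.
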